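(* Let $X=\{a,b,c\}$, $S=X^*$, and let $\mathcal{L}\subseteq 2^{X^*}$ be a nontrivial language family which is closed under finite unions, under left markers ($wL\in\mathcal{L}$ for $w\in X^*$, $L\in\mathcal{L}$), under left quotients by words ($w^{-1}L=\{v\in X^*: wv\in L\}\in\mathcal{L}$ for $w\in X^*$, $L\in\mathcal{L}$), and under regular variation ($L\cup R\in\mathcal{L}$ and $L\cap R\in\mathcal{L}$ for all $L\in\mathcal{L}$ and regular $R\subseteq X^*$). Let $A\subseteq X^*$ with $A\notin\mathcal{L}$ or $X^*\setminus A\notin\mathcal{L}$, and put $A_{xy}=xA\cup y(X^*\setminus A)$ for $x,y\in X$ and $\mathbf{C}(A)=(A_{ab},A_{bc},A_{ca})$. Then $\mathbf{C}(A)\notin\mathit{class}_3(\mathcal{L})$, and for every classification problem $\mathbf{B}\le\mathbf{C}(A)$ with $|\mathbf{B}|=3$ we have $\mathbf{B}\notin\mathit{core}_3(\mathcal{L})$.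
   Context: $\mathcal{L}$ is nontrivial if $\emptyset,X^*\in\mathcal{L}$ and for all $Q\in\mathcal{L}$ and finite $E\subseteq X^*$ both $Q\cup E\in\mathcal{L}$ and $Q\setminus E\in\mathcal{L}$. A classification problem is a vector $(A_1,\dots,A_k)$, $k\ge1$, of pairwise disjoint infinite subsets of $X^*$, of length $k$. For vectors $\mathbf{B}=(B_1,\dots,B_m)$, $\mathbf{Q}=(Q_1,\dots,Q_k)$, $\mathbf{B}\le\mathbf{Q}$ means $1\le m\le k$ and there is an injective $\sigma:\{1,\dots,m\}\to\{1,\dots,k\}$ with $B_i\subseteq Q_{\sigma(i)}$. An $\mathcal{L}$-partition is a vector of pairwise disjoint members of $\mathcal{L}$ whose union is $X^*$. $\mathit{class}_k(\mathcal{L})$: classification problems $\mathbf{A}$ of length $k$ with $\mathbf{A}\le\mathbf{Q}$ for some $\mathcal{L}$-partition $\mathbf{Q}$ of length $k$. For $k>1$, $\mathit{core}_k(\mathcal{L})$ is the set of classification problems $\mathbf{A}$ of length $k$ such that every classification problem $\mathbf{A}'\le\mathbf{A}$ with $|\mathbf{A}'|>1$ satisfies $\mathbf{A}'\notin\mathit{class}_{|\mathbf{A}'|}(\mathcal{L})$. *)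

(* Defs.v *)
From mathcomp Require Import all_boot.
Set Implicit Arguments. Unset Strict Implicit. Unset Printing Implicit Defensive.

Inductive letter : Type := la | lb | lc.
Definition word := seq letter.
Definition lang := word -> Prop.
Definition lfamily := lang -> Prop.

Definition lempty : lang := fun _ => False.
Definition lfull : lang := fun _ => True.
Definition lunion (P Q : lang) : lang := fun w => P w \/ Q w.
Definition linter (P Q : lang) : lang := fun w => P w /\ Q w.
Definition ldiff (P Q : lang) : lang := fun w => P w /\ ~ Q w.
Definition lcompl (P : lang) : lang := fun w => ~ P w.

Fixpoint inlist (w : word) (s : seq word) : Prop :=
  if s is x :: s' then x = w \/ inlist w s' else False.
Definition lfinite (E : lang) : Prop :=
  exists s : seq word, forall w, E w -> inlist w s.

Definition regular (R : lang) : Prop :=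
  exists (Q : finType) (q0 : Q) (d : Q -> letter -> Q) (F : Q -> bool),
    forall w, R w <-> F (foldl d q0 w).

Definition lmarker (w : word) (P : lang) : lang :=
  fun u => exists v, P v /\ u = w ++ v.
Definition lquot (w : word) (P : lang) : lang := fun v => P (w ++ v).

Definition nontrivial (L : lfamily) : Prop :=
  L lempty /\ L lfull /\
  forall Q E, L Q -> lfinite E -> L (lunion Q E) /\ L (ldiff Q E).

Definition closed_union (L : lfamily) : Prop :=
  forall P Q, L P -> L Q -> L (lunion P Q).
Definition closed_marker (L : lfamily) : Prop :=
  forall w P, L P -> L (lmarker w P).
Definition closed_quot (L : lfamily) : Prop :=
  forall w P, L P -> L (lquot w P).
Definition closed_regvar (L : lfamily) : Prop :=
  forall P R, L P -> regular R -> L (lunion P R) /\ L (linter P R).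

Definition is_cp (k : nat) (A : 'I_k -> lang) : Prop :=
  1 <= k /\
  (forall i j, i <> j -> forall w, A i w -> A j w -> False) /\
  (forall i, ~ lfinite (A i)).

Definition vle (m k : nat) (B : 'I_m -> lang) (Q : 'I_k -> lang) : Prop :=
  1 <= m /\ m <= k /\
  exists sigma : 'I_m -> 'I_k, injective sigma /\
    forall i w, B i w -> Q (sigma i) w.

Definition Lpartition (L : lfamily) (k : nat) (Q : 'I_k -> lang) : Prop :=
  (forall i, L (Q i)) /\
  (forall i j, i <> j -> forall w, Q i w -> Q j w -> False) /\
  (forall w, exists i, Q i w).

Definition in_class (L : lfamily) (k : nat) (A : 'I_k -> lang) : Prop :=
  is_cp A /\ exists Q : 'I_k -> lang, Lpartition L Q /\ vle A Q.

Definition in_core (L : lfamily) (k : nat) (A : 'I_k -> lang) : Prop :=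
  1 < k /\ is_cp A /\
  forall (m : nat) (A' : 'I_m -> lang),
    is_cp A' -> vle A' A -> 1 < m -> ~ in_class L A'.

Definition Axy (x y : letter) (A : lang) : lang :=
  lunion (lmarker [:: x] A) (lmarker [:: y] (lcompl A)).

Definition CA (A : lang) : 'I_3 -> lang :=
  fun i => if val i == 0 then Axy la lb A
           else if val i == 1 then Axy lb lc A
           else Axy lc la A.

(* Main.v *)
From Stdlib Require Import Classical FunctionalExtensionality PropExtensionality.
Require Import Defs.
From mathcomp Require Import all_boot.

Lemma Lext (L : lfamily) (P P' : lang) : L P -> (forall w, P w <-> P' w) -> L P'.
Proof.
move=> HP H.
have -> : P' = P.
  apply: functional_extensionality => w; apply: propositional_extensionality.
  by split; move/H.
done.
Qed.

Definition leqb (x y : letter) : bool :=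
  match x, y with la, la => true | lb, lb => true | lc, lc => true | _, _ => false end.

Lemma leqbP x y : leqb x y -> x = y.
Proof. by case: x; case: y. Qed.

Definition isl (l : letter) (w : word) : bool :=
  if w is x :: _ then leqb x l else false.

Lemma isl_regular l : regular (fun w => isl l w).
Proof.
exists (option bool : finType), None.
exists (fun q x => match q with None => Some (leqb x l) | Some b => Some b end).
exists (fun q => match q with Some true => true | _ => false end).
have K : forall b v, foldl (fun q x => match q with None => Some (leqb x l) | Some b => Some b end) (Some b) v = Some b.
  by move=> b; elim=> //.
by case=> [|x v] //=; rewrite K; case: (leqb x l).
Qed.

Lemma isl_regular_c l : regular (fun w => ~~ isl l w).
Proof.
exists (option bool : finType), None.
exists (fun q x => match q with None => Some (leqb x l) | Some b => Some b end).
exists (fun q => match q with Some true => false | _ => true end).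
have K : forall b v, foldl (fun q x => match q with None => Some (leqb x l) | Some b => Some b end) (Some b) v = Some b.
  by move=> b; elim=> //.
by case=> [|x v] //=; rewrite K; case: (leqb x l).
Qed.

Lemma L_reg (L : lfamily) R : nontrivial L -> closed_regvar L -> regular R -> L R.
Proof.
move=> [H0 _] Hr HR.
apply: (@Lext L (lunion lempty R)); first by case: (Hr _ _ H0 HR).
by move=> w; split; [case | right].
Qed.

Lemma inlist_cat w s t : inlist w s \/ inlist w t -> inlist w (s ++ t).
Proof.
elim: s => [|x s IH] /=; first by case.
by case=> [[H|H]|H]; [left | right; apply: IH; left | right; apply: IH; right].
Qed.

Lemma inf_split (B : lang) : ~ lfinite B -> exists l, ~ lfinite (fun w => B w /\ isl l w).
Proof.
move=> HB.
apply: NNPP => H.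
have F : forall l, lfinite (fun w => B w /\ isl l w).
  by move=> l; apply: NNPP => H'; apply: H; exists l.
apply: HB.
case: (F la) => sa Ha; case: (F lb) => sb Hb; case: (F lc) => sc Hc.
exists ([:: [::]] ++ (sa ++ (sb ++ sc))) => w Bw.
case: w Bw => [|x v] Bw; first by apply: inlist_cat; left; left.
apply: inlist_cat; right.
case: x Bw => Bw.
- by apply: inlist_cat; left; apply: Ha.
- by apply: inlist_cat; right; apply: inlist_cat; left; apply: Hb.
- by apply: inlist_cat; right; apply: inlist_cat; right; apply: Hc.
Qed.

Definition o0 : 'I_3 := @Ordinal 3 0 isT.
Definition o1 : 'I_3 := @Ordinal 3 1 isT.
Definition o2 : 'I_3 := @Ordinal 3 2 isT.

Definition good (j : 'I_3) (l : letter) : bool :=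
  if val j == 0 then leqb l la || leqb l lb
  else if val j == 1 then leqb l lb || leqb l lc
  else leqb l lc || leqb l la.

Lemma CA_good A j w l : CA A j w -> isl l w -> good j l.
Proof.
rewrite /CA /good /Axy /lunion /lmarker.
case: j => [[|[|[|n]]] Hn] //=;
  (case=> [[v [_ ->]]|[v [_ ->]]]; case: l) => //.
Qed.

Lemma pigeon (s0 s1 s2 : 'I_3) l :
  s0 <> s1 -> s0 <> s2 -> s1 <> s2 -> good s0 l -> good s1 l -> good s2 l -> False.
Proof.
case: s0 => [[|[|[|n0]]] H0] //; case: s1 => [[|[|[|n1]]] H1] //;
case: s2 => [[|[|[|n2]]] H2] //; case: l => //=;
(move=> a b c; exfalso;
  first [apply: a; exact: val_inj | apply: b; exact: val_inj | apply: c; exact: val_inj]).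
Qed.

Lemma o_neq (i j : 'I_3) : val i != val j -> i <> j.
Proof. by move=> H E; rewrite E eqxx in H. Qed.

Lemma part1 (L : lfamily) (A : lang) :
  closed_quot L -> (~ L A \/ ~ L (lcompl A)) -> ~ in_class L (CA A).
Proof.
move=> Hq HA [_ [Q [[QL [Qd _]] [_ [_ [s [sinj sQ]]]]]]].
have d02 : s o0 <> s o2 by move=> E; move: (sinj _ _ E).
have h0 : forall w, A w -> Q (s o0) (la :: w).
  by move=> w Aw; apply: sQ; left; exists w.
have h2 : forall w, ~ A w -> Q (s o2) (la :: w).
  by move=> w Aw; apply: sQ; right; exists w.
have E1 : forall w, lquot [:: la] (Q (s o0)) w <-> A w.
  move=> w; split; last exact: h0.
  move=> H; apply: NNPP => nA; exact: (Qd _ _ d02 _ H (h2 _ nA)).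
have E2 : forall w, lquot [:: la] (Q (s o2)) w <-> lcompl A w.
  move=> w; split; last exact: h2.
  move=> H Aw; exact: (Qd _ _ d02 _ (h0 _ Aw) H).
case: HA => HA; apply: HA.
- exact: (@Lext L _ _ (Hq [:: la] _ (QL (s o0))) E1).
- exact: (@Lext L _ _ (Hq [:: la] _ (QL (s o2))) E2).
Qed.

Definition inf (B : lang) l := ~ lfinite (fun w => B w /\ isl l w).

Lemma isl2 l l' w : l <> l' -> isl l w -> isl l' w -> False.
Proof.
move=> H; case: w => [|x v] //= a b; apply: H.
by rewrite -(leqbP _ _ a) -(leqbP _ _ b).
Qed.

Lemma build (L : lfamily) (B : 'I_3 -> lang) i j l l' :
  nontrivial L -> closed_regvar L -> i <> j -> l <> l' ->
  inf (B i) l -> inf (B j) l' ->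
  (forall i j, i <> j -> forall w, B i w -> B j w -> False) ->
  exists A' : 'I_2 -> lang, is_cp A' /\ vle A' B /\ in_class L A'.
Proof.
move=> Hn Hr ij ll' Ii Ij Bd.
pose A' (k : 'I_2) : lang := if val k == 0 then (fun w => B i w /\ isl l w)
                             else (fun w => B j w /\ isl l' w).
pose Q (k : 'I_2) : lang := if val k == 0 then (fun w => isl l w)
                             else (fun w => ~~ isl l w).
have cp : is_cp A'.
  split => //; split.
  - move=> [[|[|k1]] h1] [[|[|k2]] h2] //= ne w; rewrite /A' /=.
    + by case: ne; apply: val_inj.
    + by move=> [b1 _] [b2 _]; exact: (Bd _ _ ij w b1 b2).
    + by move=> [b1 _] [b2 _]; apply: (Bd _ _ ij w b2 b1).
    + by case: ne; apply: val_inj.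
  - by move=> [[|[|k]] h] //=.
exists A'; split => //; split.
  split => //; split => //.
  exists (fun k : 'I_2 => if val k == 0 then i else j); split.
    by move=> [[|[|k1]] h1] [[|[|k2]] h2] //= E; first [exact: val_inj | case: ij; rewrite ?E].
  by move=> [[|[|k]] h] //= w [].
split => //.
exists Q; split.
  split.
    move=> [[|[|k]] h] //=; rewrite /Q /=.
    - exact: L_reg (isl_regular l).
    - exact: L_reg (isl_regular_c l).
  split.
    move=> [[|[|k1]] h1] [[|[|k2]] h2] //= ne w; rewrite /Q /=.
    + by case: ne; apply: val_inj.
    + by move=> ->.
    + by move=> /negP.
    + by case: ne; apply: val_inj.
  move=> w; case E: (isl l w).
    by exists (@Ordinal 2 0 isT); rewrite /Q /= E.
  by exists (@Ordinal 2 1 isT); rewrite /Q /= E.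
split => //; split => //.
exists id; split => //.
move=> [[|[|k]] h] //= w; rewrite /A' /Q /=.
- by case.
- move=> [_ H]; apply/negP => H'; exact: (isl2 _ _ _ ll' H' H).
Qed.

Lemma part2 (L : lfamily) (A : lang) :
  nontrivial L -> closed_regvar L ->
  (forall B : 'I_3 -> lang, is_cp B -> vle B (CA A) -> ~ in_core L B).
Proof.
move=> Hn Hr B [_ [Bd Binf]] [_ [_ [s [sinj sB]]]] [_ [_ Hc]].
have Hgood : forall i l, inf (B i) l -> good (s i) l.
  move=> i l Hinf; apply: NNPP => ng; apply: Hinf; exists [::] => w [Bw Iw].
  by apply: ng; exact: (CA_good _ _ _ _ (sB _ _ Bw) Iw).
have fin : forall i j l l', i <> j -> l <> l' -> inf (B i) l -> inf (B j) l' -> False.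
  move=> i j l l' ij ll' Ii Ij.
  have [A' [cp [v cl]]] := @build L B i j l l' Hn Hr ij ll' Ii Ij Bd.
  exact: (Hc 2 A' cp v isT cl).
have [l0 I0] := inf_split _ (Binf o0).
have [l1 I1] := inf_split _ (Binf o1).
have [l2 I2] := inf_split _ (Binf o2).
have n01 : o0 <> o1 by [].
have n02 : o0 <> o2 by [].
have n12 : o1 <> o2 by [].
case: (classic (l0 = l1)) => e01; last exact: (fin _ _ _ _ n01 e01 I0 I1).
case: (classic (l0 = l2)) => e02; last exact: (fin _ _ _ _ n02 e02 I0 I2).
subst l1 l2.
apply: (@pigeon (s o0) (s o1) (s o2) l0).
- by move/sinj.
- by move/sinj.
- by move/sinj.
- exact: Hgood.
- exact: Hgood.
- exact: Hgood.
Qed.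

Theorem theorem3p6 (L : lfamily) (A : lang) :
  nontrivial L -> closed_union L -> closed_marker L -> closed_quot L ->
  closed_regvar L ->
  (~ L A \/ ~ L (lcompl A)) ->
  ~ in_class L (CA A) /\
  (forall B : 'I_3 -> lang, is_cp B -> vle B (CA A) -> ~ in_core L B).
Proof.
move=> Hn _ _ Hq Hr HA; split; first exact: part1.
exact: part2.
Qed.
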